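(* Assume (A1)–(A4) and let $b\in\mathcal H$ be consistent. Then the optimization problem $$\min\{ f(Wx) : x\in\mathscr D(W),\ Ax=b\}$$ admits a unique solution $x^*\in\mathscr D(W)$, and it satisfies $Wx^*\in\mathscr D(f)$.
   Context: $\mathcal X,\mathcal Y,\mathcal H$ are real Hilbert spaces. Standing assumptions: (A1) $A:\mathcal X\to\mathcal H$ is a bounded linear operator. (A2) $f:\mathcal Y\to(-\infty,\infty]$ is proper, lower semicontinuous and strongly convex with constant $c_0>0$, i.e. $f(ty_1+(1-t)y_2)+c_0t(1-t)\|y_1-y_2\|^2\le tf(y_1)+(1-t)f(y_2)$ for all $y_1,y_2\in\mathcal Y$, $t\in[0,1]$. (A3) $W:\mathscr D(W)\subset\mathcal X\to\mathcal Y$ is a densely defined closed linear operator with domain $\mathscr D(W)$. (A4) There is $c_1>0$ with $\|Ax\|^2+\|Wx\|^2\ge c_1\|x\|^2$ for all $x\in\mathscr D(W)$. $\mathscr D(f)=\{y: f(y)<\infty\}$. The data $b\in\mathcal H$ is called consistent if $b=Ax$ for some $x\in\mathscr D(W)$ with $Wx\in\mathscr D(f)$. *)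

(* Defs.v *)
From Stdlib Require Import Reals.
Open Scope R_scope.

Record Hilbert := {
  hcar :> Type;
  hzero : hcar;
  hadd : hcar -> hcar -> hcar;
  hopp : hcar -> hcar;
  hscal : R -> hcar -> hcar;
  hinner : hcar -> hcar -> R;
  hadd_assoc : forall x y z, hadd x (hadd y z) = hadd (hadd x y) z;
  hadd_comm : forall x y, hadd x y = hadd y x;
  hadd_zero : forall x, hadd hzero x = x;
  hadd_opp : forall x, hadd (hopp x) x = hzero;
  hscal_assoc : forall a b x, hscal a (hscal b x) = hscal (a * b) x;
  hscal_one : forall x, hscal 1 x = x;
  hscal_distr_v : forall a x y, hscal a (hadd x y) = hadd (hscal a x) (hscal a y);
  hscal_distr_s : forall a b x, hscal (a + b) x = hadd (hscal a x) (hscal b x);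
  hinner_sym : forall x y, hinner x y = hinner y x;
  hinner_add : forall x y z, hinner (hadd x y) z = hinner x z + hinner y z;
  hinner_scal : forall a x y, hinner (hscal a x) y = a * hinner x y;
  hinner_pos : forall x, 0 <= hinner x x;
  hinner_def : forall x, hinner x x = 0 -> x = hzero;
  hcomplete : forall u : nat -> hcar,
    (forall eps, 0 < eps -> exists N, forall m n, (N <= m)%nat -> (N <= n)%nat ->
        sqrt (hinner (hadd (u m) (hopp (u n))) (hadd (u m) (hopp (u n)))) < eps) ->
    exists l, forall eps, 0 < eps -> exists N, forall n, (N <= n)%nat ->
        sqrt (hinner (hadd (u n) (hopp l)) (hadd (u n) (hopp l))) < eps
}.

Arguments hzero {h}.
Arguments hadd {h}.
Arguments hopp {h}.
Arguments hscal {h}.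
Arguments hinner {h}.

Definition hnorm {X : Hilbert} (x : X) : R := sqrt (hinner x x).
Definition hsub {X : Hilbert} (x y : X) : X := hadd x (hopp y).

Definition hconv {X : Hilbert} (u : nat -> X) (l : X) : Prop :=
  forall eps, 0 < eps -> exists N, forall n, (N <= n)%nat -> hnorm (hsub (u n) l) < eps.

Inductive ereal := Fin (r : R) | PInf.

Definition ele (a b : ereal) : Prop :=
  match a, b with
  | Fin x, Fin y => x <= y
  | _, PInf => True
  | PInf, Fin _ => False
  end.

Definition dom {Y : Hilbert} (f : Y -> ereal) (y : Y) : Prop := f y <> PInf.

Definition proper {Y : Hilbert} (f : Y -> ereal) : Prop := exists y, dom f y.

Definition lsc {Y : Hilbert} (f : Y -> ereal) : Prop :=
  forall (a : R) (u : nat -> Y) (y : Y),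
    (forall n, ele (f (u n)) (Fin a)) -> hconv u y -> ele (f y) (Fin a).

(** Strong convexity with constant c0 (for an extended-valued f):
    f(t y1 + (1-t) y2) + c0 t(1-t)||y1-y2||^2 <= t f(y1) + (1-t) f(y2)
    for all y1 y2 and t in [0,1], with the conventions r + oo = oo, 0*oo = 0.
    This unfolds to the statement below (the inequality is trivial when
    y1 or y2 is outside dom f, and forces the combination into dom f otherwise). *)
Definition strongly_convex {Y : Hilbert} (f : Y -> ereal) (c0 : R) : Prop :=
  forall (y1 y2 : Y) (t : R), 0 <= t <= 1 -> forall r1 r2,
    f y1 = Fin r1 -> f y2 = Fin r2 ->
    exists r, f (hadd (hscal t y1) (hscal (1 - t) y2)) = Fin r /\
      r + c0 * t * (1 - t) * (hnorm (hsub y1 y2)) ^ 2 <= t * r1 + (1 - t) * r2.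

Definition bounded_linear {X H : Hilbert} (A : X -> H) : Prop :=
  (forall x y, A (hadd x y) = hadd (A x) (A y)) /\
  (forall a x, A (hscal a x) = hscal a (A x)) /\
  (exists C, forall x, hnorm (A x) <= C * hnorm x).

(** Densely defined closed linear operator W : D(W) subset X -> Y.
    The domain is the predicate D; values of W outside D are irrelevant. *)
Definition linear_subspace {X : Hilbert} (D : X -> Prop) : Prop :=
  D hzero /\ (forall x y, D x -> D y -> D (hadd x y)) /\
  (forall a x, D x -> D (hscal a x)).

Definition dense {X : Hilbert} (D : X -> Prop) : Prop :=
  forall x eps, 0 < eps -> exists d, D d /\ hnorm (hsub x d) < eps.

Definition densely_defined_closed_linear {X Y : Hilbert}
  (D : X -> Prop) (W : X -> Y) : Prop :=
  linear_subspace D /\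
  (forall x y, D x -> D y -> W (hadd x y) = hadd (W x) (W y)) /\
  (forall a x, D x -> W (hscal a x) = hscal a (W x)) /\
  dense D /\
  (forall (u : nat -> X) x y, (forall n, D (u n)) -> hconv u x ->
     hconv (fun n => W (u n)) y -> D x /\ W x = y).

Definition consistent {X Y H : Hilbert} (A : X -> H) (D : X -> Prop) (W : X -> Y)
  (f : Y -> ereal) (b : H) : Prop :=
  exists x, D x /\ A x = b /\ dom f (W x).

Definition is_solution {X Y H : Hilbert} (A : X -> H) (D : X -> Prop) (W : X -> Y)
  (f : Y -> ereal) (b : H) (xs : X) : Prop :=
  D xs /\ A xs = b /\ (forall x, D x -> A x = b -> ele (f (W xs)) (f (W x))).

(* Main.v *)
Require Import Defs.
From Stdlib Require Import Reals ClassicalEpsilon Classical Lra Psatz.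
Open Scope R_scope.

Lemma hadd_zero_r (X : Hilbert) (x : X) : hadd x hzero = x.
Proof. rewrite hadd_comm; apply hadd_zero. Qed.

Lemma hadd_opp_r (X : Hilbert) (x : X) : hadd x (hopp x) = hzero.
Proof. rewrite hadd_comm; apply hadd_opp. Qed.

Lemma hcancel_l (X : Hilbert) (a x y : X) : hadd a x = hadd a y -> x = y.
Proof.
  intro H. rewrite <- (hadd_zero _ x), <- (hadd_zero _ y), <- (hadd_opp _ a),
    <- !hadd_assoc, H. reflexivity.
Qed.

Lemma hscal_0 (X : Hilbert) (x : X) : hscal 0 x = hzero.
Proof.
  apply (hcancel_l _ (hscal 0 x)). rewrite <- hscal_distr_s, hadd_zero_r.
  f_equal; ring.
Qed.

Lemma hopp_scal (X : Hilbert) (x : X) : hopp x = hscal (-1) x.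
Proof.
  apply (hcancel_l _ x). rewrite hadd_opp_r.
  assert (E: hadd (hscal 1 x) (hscal (-1) x) = hzero).
  { rewrite <- hscal_distr_s. replace (1 + -1) with 0 by ring. apply hscal_0. }
  rewrite hscal_one in E. auto.
Qed.

Lemma hscal_zero_v (X : Hilbert) (a : R) : hscal a (@hzero X) = hzero.
Proof. transitivity (hscal a (hscal 0 (@hzero X))). rewrite hscal_0; reflexivity.
  rewrite hscal_assoc, Rmult_0_r; apply hscal_0. Qed.

Lemma hinner_zero_l (X : Hilbert) (y : X) : hinner hzero y = 0.
Proof. rewrite <- (hscal_0 _ hzero), hinner_scal. ring. Qed.

Lemma hinner_scal_r (X : Hilbert) a (x y : X) : hinner x (hscal a y) = a * hinner x y.
Proof. rewrite hinner_sym, hinner_scal, hinner_sym. reflexivity. Qed.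

Lemma hnorm_nonneg (X : Hilbert) (x : X) : 0 <= hnorm x.
Proof. apply sqrt_pos. Qed.

Lemma hnorm_sq (X : Hilbert) (x : X) : hnorm x ^ 2 = hinner x x.
Proof. apply pow2_sqrt, hinner_pos. Qed.

Lemma hnorm_zero (X : Hilbert) : hnorm (@hzero X) = 0.
Proof. unfold hnorm. rewrite hinner_zero_l. apply sqrt_0. Qed.

Lemma hnorm_eq0 (X : Hilbert) (x : X) : hnorm x = 0 -> x = hzero.
Proof. unfold hnorm; intro H. apply hinner_def. apply sqrt_eq_0; auto. apply hinner_pos. Qed.

Lemma hnorm_scal (X : Hilbert) a (x : X) : hnorm (hscal a x) = Rabs a * hnorm x.
Proof.
  unfold hnorm. rewrite hinner_scal, hinner_scal_r, <- Rmult_assoc.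
  rewrite sqrt_mult_alt. rewrite <- sqrt_Rsqr_abs. reflexivity.
  nra.
Qed.

Lemma hsub_self (X : Hilbert) (x : X) : hsub x x = hzero.
Proof. apply hadd_opp_r. Qed.

Lemma hsub_eq0 (X : Hilbert) (x y : X) : hsub x y = hzero -> x = y.
Proof.
  unfold hsub; intro H. apply (hcancel_l _ (hopp y)).
  rewrite hadd_comm, H, hadd_opp. reflexivity.
Qed.

Lemma hsub_swap (X : Hilbert) (x y : X) : hsub y x = hscal (-1) (hsub x y).
Proof.
  unfold hsub. rewrite hscal_distr_v, !(hopp_scal _ y), hscal_assoc, <- (hopp_scal _ x).
  replace (-1 * -1) with 1 by ring. rewrite hscal_one, hadd_comm. reflexivity.
Qed.

Lemma hnorm_sub_sym (X : Hilbert) (x y : X) : hnorm (hsub y x) = hnorm (hsub x y).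
Proof. rewrite hsub_swap, hnorm_scal. replace (Rabs (-1)) with 1 by (rewrite Rabs_left; lra). ring. Qed.

Lemma hcomb_sub (X : Hilbert) t (y y0 : X) :
  hsub (hadd (hscal t y) (hscal (1 - t) y0)) y0 = hscal t (hsub y y0).
Proof.
  unfold hsub. rewrite hscal_distr_v, !hopp_scal, hscal_assoc, <- hadd_assoc,
    <- hscal_distr_s. f_equal. f_equal. ring.
Qed.

Lemma hscal_same (X : Hilbert) a c (x : X) : hadd (hscal a x) (hscal c x) = hscal (a + c) x.
Proof. rewrite hscal_distr_s. reflexivity. Qed.

Lemma lin_sub (X Y : Hilbert) (P : X -> Prop) (L : X -> Y)
  (Hadd : forall x y, P x -> P y -> L (hadd x y) = hadd (L x) (L y))
  (Hs : forall a x, P x -> L (hscal a x) = hscal a (L x))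
  (HP : forall a x, P x -> P (hscal a x)) x y :
  P x -> P y -> L (hsub x y) = hsub (L x) (L y).
Proof.
  intros Px Py. unfold hsub. rewrite !hopp_scal, Hadd, Hs; auto.
Qed.

Lemma lin_comb (X Y : Hilbert) (P : X -> Prop) (L : X -> Y)
  (Hadd : forall x y, P x -> P y -> L (hadd x y) = hadd (L x) (L y))
  (Hs : forall a x, P x -> L (hscal a x) = hscal a (L x))
  (HP : forall a x, P x -> P (hscal a x)) a c x y :
  P x -> P y -> L (hadd (hscal a x) (hscal c y)) = hadd (hscal a (L x)) (hscal c (L y)).
Proof.
  intros Px Py. rewrite Hadd, !Hs; auto.
Qed.

Lemma small_inv (eps : R) : 0 < eps -> exists N, forall n, (N <= n)%nat -> / INR (S n) < eps.
Proof.
  intro He. destruct (INR_unbounded (/ eps)) as [N HN]. exists N. intros n Hn.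
  apply le_INR in Hn. rewrite S_INR.
  assert (0 < INR n + 1) by (pose proof (pos_INR n); lra).
  apply (Rmult_lt_reg_l (INR n + 1)); auto. rewrite Rinv_r by lra.
  assert (/ eps * eps = 1) by (field; lra).
  assert (0 < / eps) by (apply Rinv_0_lt_compat; auto).
  nra.
Qed.

Lemma arith_case2 (c0 eps d s t : R) : 0 < c0 -> 0 < eps -> 2 * eps <= d ->
  t = eps / (2 * d) -> s > 2 + 8 / (c0 * eps ^ 2) ->
  t * s + c0 * t * (1 - t) * d ^ 2 >= 1.
Proof.
  intros Hc He Hd Ht Hs.
  assert (Hdp : 0 < d) by lra.
  assert (Htd : t * d = eps / 2) by (rewrite Ht; field; lra).
  assert (Ht0 : 0 < t) by (rewrite Ht; apply Rdiv_lt_0_compat; lra).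
  assert (Ht1 : t <= 1/4).
  { rewrite Ht. apply (Rmult_le_reg_r (2*d)). lra. unfold Rdiv. rewrite Rmult_assoc, Rinv_l by lra. lra. }
  set (K := 8 / (c0 * eps ^ 2)) in *.
  assert (HK : c0 * eps ^ 2 * K = 8) by (unfold K; field; lra).
  assert (Hce : 0 < c0 * eps ^ 2) by (apply Rmult_lt_0_compat; [lra| apply pow_lt; lra]).
  assert (HK0 : 0 <= K) by (unfold K; apply Rlt_le; apply Rdiv_lt_0_compat; lra).
  assert (H2 : c0 * t * (1 - t) * d ^ 2 >= c0 * eps * d / 4).
  { replace (c0 * t * (1 - t) * d ^ 2) with (c0 * (t * d) * (1 - t) * d) by ring.
    rewrite Htd. assert (0 < c0 * eps * d) by (apply Rmult_lt_0_compat; nra). nra. }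
  destruct (Rle_or_lt d (eps * s / 2)) as [Hc1|Hc1].
  - assert (t * s >= 1).
    { assert (t * s * d = eps * s / 2) by (replace (t*s*d) with (t*d*s) by ring; rewrite Htd; field).
      nra. }
    assert (0 <= c0 * eps * d / 4) by (assert (0 < c0 * eps * d) by (apply Rmult_lt_0_compat; nra); lra).
    nra.
  - assert (c0 * eps * d / 4 >= 1).
    { assert (c0 * eps * d / 4 >= c0 * eps * (eps * s / 2) / 4).
      { assert (0 < c0 * eps) by nra. nra. }
      assert (c0 * eps * (eps * s / 2) / 4 = c0 * eps ^ 2 * s / 8) by field.
      assert (c0 * eps ^ 2 * s >= c0 * eps ^ 2 * K) by (assert (0 < c0 * eps ^ 2) by nra; nra).
      lra. }
    nra.
Qed.

Lemma f_lower (Y : Hilbert) (f : Y -> ereal) (c0 : R) :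
  proper f -> lsc f -> 0 < c0 -> strongly_convex f c0 ->
  exists L, forall y r, f y = Fin r -> L <= r.
Proof.
  intros [y0 Hy0] Hlsc Hc0 Hsc.
  unfold dom in Hy0. destruct (f y0) as [r0|] eqn:E0; [|contradiction].
  apply NNPP; intro Hno.
  assert (key : forall eps, 0 < eps -> exists z, ele (f z) (Fin (r0 - 1)) /\ hnorm (hsub z y0) < eps).
  { intros eps He.
    set (K := 8 / (c0 * eps ^ 2)).
    assert (Hce : 0 < c0 * eps ^ 2) by (apply Rmult_lt_0_compat; [lra| apply pow_lt; lra]).
    assert (HK0 : 0 <= K) by (unfold K; apply Rlt_le; apply Rdiv_lt_0_compat; lra).
    assert (Hex : exists y r, f y = Fin r /\ r < r0 - 2 - K).
    { apply NNPP; intro Hn. apply Hno. exists (r0 - 2 - K). intros y r Hr.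
      apply Rnot_lt_le. intro Hlt. apply Hn. exists y, r. split; auto. }
    destruct Hex as [y [r [Hr Hlt]]].
    set (d := hnorm (hsub y y0)).
    assert (Hd0 : 0 <= d) by apply hnorm_nonneg.
    destruct (Rlt_or_le d (2 * eps)) as [Hd|Hd].
    - destruct (Hsc y y0 (1/2) ltac:(lra) r r0 Hr E0) as [rz [Hz Hrz]].
      exists (hadd (hscal (1/2) y) (hscal (1 - 1/2) y0)). split.
      + rewrite Hz. simpl. fold d in Hrz.
        assert (0 <= c0 * (1/2) * (1 - 1/2) * d ^ 2) by (assert (0 <= d^2) by nra; nra). lra.
      + rewrite hcomb_sub, hnorm_scal. fold d.
        rewrite Rabs_right by lra. lra.
    - set (t := eps / (2 * d)).
      assert (Hdp : 0 < d) by lra.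
      assert (Ht0 : 0 < t) by (apply Rdiv_lt_0_compat; lra).
      assert (Ht1 : t <= 1/4).
      { unfold t. apply (Rmult_le_reg_r (2*d)). lra. unfold Rdiv. rewrite Rmult_assoc, Rinv_l by lra. lra. }
      destruct (Hsc y y0 t ltac:(lra) r r0 Hr E0) as [rz [Hz Hrz]].
      exists (hadd (hscal t y) (hscal (1 - t) y0)). split.
      + rewrite Hz. simpl. fold d in Hrz.
        pose proof (arith_case2 c0 eps d (r0 - r) t Hc0 He Hd eq_refl ltac:(fold K; lra)).
        nra.
      + rewrite hcomb_sub, hnorm_scal. fold d.
        rewrite Rabs_right by lra. unfold t. replace (eps / (2 * d) * d) with (eps / 2) by (field; lra). lra. }
  assert (Hseq : forall n : nat, exists z, ele (f z) (Fin (r0 - 1)) /\ hnorm (hsub z y0) < / INR (S n)).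
  { intro n. apply key. apply Rinv_0_lt_compat. apply lt_0_INR. lia. }
  set (z := fun n => proj1_sig (constructive_indefinite_description _ (Hseq n))).
  assert (Hz : forall n, ele (f (z n)) (Fin (r0 - 1)) /\ hnorm (hsub (z n) y0) < / INR (S n)).
  { intro n. unfold z. destruct (constructive_indefinite_description _ (Hseq n)); auto. }
  assert (Hc : hconv z y0).
  { intros eps He. destruct (small_inv eps He) as [N HN]. exists N. intros n Hn.
    specialize (HN n Hn). destruct (Hz n). lra. }
  pose proof (Hlsc (r0 - 1) z y0 (fun n => proj1 (Hz n)) Hc) as Hf.
  rewrite E0 in Hf. simpl in Hf. lra.
Qed.

Lemma cauchy_crit (g : nat -> nat -> R) K : 0 < K -> (forall m n, 0 <= g m n) ->
  (forall m n, g m n ^ 2 <= K * (/ INR (S m) + / INR (S n))) ->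
  forall eps, 0 < eps -> exists N, forall m n, (N <= m)%nat -> (N <= n)%nat -> g m n < eps.
Proof.
  intros HK Hg Hb eps He.
  assert (Hd : 0 < eps ^ 2 / (2 * K)) by (apply Rdiv_lt_0_compat; nra).
  destruct (small_inv _ Hd) as [N HN]. exists N. intros m n Hm Hn.
  pose proof (HN m Hm). pose proof (HN n Hn). pose proof (Hb m n). pose proof (Hg m n).
  assert (K * (/ INR (S m) + / INR (S n)) < K * (2 * (eps ^ 2 / (2 * K)))) by nra.
  replace (K * (2 * (eps ^ 2 / (2 * K)))) with (eps ^ 2) in H3 by (field; lra).
  nra.
Qed.

Lemma zero_of_small (a : R) : 0 <= a -> (forall eps, 0 < eps -> a < eps) -> a = 0.
Proof. intros H1 H2. destruct (Req_dec a 0); auto. specialize (H2 a ltac:(lra)). lra. Qed.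
Ltac nz := repeat split; try (apply not_0_INR; lia); try (apply Rgt_not_eq; lra); try (apply Rlt_not_eq; lra); try lra.

Theorem theorem2p1 (X Y H : Hilbert) (A : X -> H) (f : Y -> ereal) (c0 : R)
  (D : X -> Prop) (W : X -> Y) (c1 : R) (b : H)
  (HA1 : bounded_linear A)
  (HA2 : proper f /\ lsc f /\ 0 < c0 /\ strongly_convex f c0)
  (HA3 : densely_defined_closed_linear D W)
  (HA4 : 0 < c1 /\ forall x, D x -> (hnorm (A x)) ^ 2 + (hnorm (W x)) ^ 2 >= c1 * (hnorm x) ^ 2)
  (Hb : consistent A D W f b) :
  exists xs, is_solution A D W f b xs /\
    (forall x, is_solution A D W f b x -> x = xs) /\
    dom f (W xs).
Proof.
  destruct HA1 as [Aadd [Ascal [C HC]]].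
  destruct HA2 as [Hprop [Hlsc [Hc0 Hsc]]].
  destruct HA3 as [[D0 [Dadd Dscal]] [Wadd [Wscal [_ Wclosed]]]].
  destruct HA4 as [Hc1 HA4].
  destruct (f_lower Y f c0 Hprop Hlsc Hc0 Hsc) as [L HL].
  set (E := fun r => exists x, D x /\ A x = b /\ f (W x) = Fin (- r)).
  assert (HEb : bound E).
  { exists (- L). intros r [x [_ [_ Hx]]]. pose proof (HL _ _ Hx). lra. }
  assert (HEn : exists r, E r).
  { destruct Hb as [x0 [Dx0 [Ax0 Hd0]]]. unfold dom in Hd0.
    destruct (f (W x0)) as [r0|] eqn:E0; [|contradiction].
    exists (- r0). exists x0. repeat split; auto. rewrite E0. f_equal. ring. }
  destruct (completeness E HEb HEn) as [M [HM1 HM2]].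
  set (m := - M).
  assert (Hm1 : forall x r, D x -> A x = b -> f (W x) = Fin r -> m <= r).
  { intros x r Dx Ax Hx. assert (E (- r)) by (exists x; repeat split; auto; rewrite Hx; f_equal; ring).
    pose proof (HM1 _ H0). unfold m. lra. }
  assert (Hm2 : forall eps, 0 < eps -> exists x r, D x /\ A x = b /\ f (W x) = Fin r /\ r < m + eps).
  { intros eps He. apply NNPP; intro Hn.
    assert (is_upper_bound E (M - eps)).
    { intros r [x [Dx [Ax Hx]]]. apply Rnot_lt_le; intro Hlt. apply Hn.
      exists x, (- r). repeat split; auto. unfold m. lra. }
    pose proof (HM2 _ H0). lra. }
  assert (Dsub : forall x y, D x -> D y -> D (hsub x y)).
  { intros x y Dx Dy. unfold hsub. rewrite hopp_scal. auto. }
  assert (Dcomb : forall a c x y, D x -> D y -> D (hadd (hscal a x) (hscal c y))) by auto.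
  assert (Wsub : forall x y, D x -> D y -> W (hsub x y) = hsub (W x) (W y)).
  { intros. apply (lin_sub X Y D W); auto. }
  assert (Wcomb : forall a c x y, D x -> D y -> W (hadd (hscal a x) (hscal c y)) = hadd (hscal a (W x)) (hscal c (W y))).
  { intros. apply (lin_comb X Y D W); auto. }
  assert (Asub : forall x y, A (hsub x y) = hsub (A x) (A y)).
  { intros. apply (lin_sub X H (fun _ => True) A); auto. }
  assert (Acomb : forall a c x y, A (hadd (hscal a x) (hscal c y)) = hadd (hscal a (A x)) (hscal c (A y))).
  { intros. apply (lin_comb X H (fun _ => True) A); auto. }
  assert (Hmid : forall x x' rx rx', D x -> A x = b -> f (W x) = Fin rx ->
            D x' -> A x' = b -> f (W x') = Fin rx' ->
            c0 / 4 * hnorm (hsub (W x) (W x')) ^ 2 <= (rx + rx') / 2 - m).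
  { intros x x' rx rx' Dx Ax Hx Dx' Ax' Hx'.
    destruct (Hsc (W x) (W x') (1/2) ltac:(lra) rx rx' Hx Hx') as [rz [Hz Hrz]].
    rewrite <- Wcomb in Hz by auto.
    assert (m <= rz).
    { apply (Hm1 _ _ (Dcomb _ _ _ _ Dx Dx') ltac:(rewrite Acomb, Ax, Ax', hscal_same; replace (1/2 + (1 - 1/2)) with 1 by ring; apply hscal_one) Hz). }
    lra. }
  assert (Hco : forall x x', D x -> A x = b -> D x' -> A x' = b ->
            c1 * hnorm (hsub x x') ^ 2 <= hnorm (hsub (W x) (W x')) ^ 2).
  { intros x x' Dx Ax Dx' Ax'. pose proof (HA4 _ (Dsub _ _ Dx Dx')) as Hh.
    rewrite Asub, Ax, Ax', hsub_self, hnorm_zero, Wsub in Hh by auto. lra. }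
  assert (Hseq : forall n : nat, exists p : X * R, D (fst p) /\ A (fst p) = b /\
             f (W (fst p)) = Fin (snd p) /\ snd p < m + / INR (S n)).
  { intro n. destruct (Hm2 (/ INR (S n))) as [x [r Hxr]].
    apply Rinv_0_lt_compat, lt_0_INR; lia. exists (x, r). exact Hxr. }
  set (p := fun n => proj1_sig (constructive_indefinite_description _ (Hseq n))).
  assert (Hp : forall n, D (fst (p n)) /\ A (fst (p n)) = b /\
             f (W (fst (p n))) = Fin (snd (p n)) /\ snd (p n) < m + / INR (S n)).
  { intro n. unfold p. destruct (constructive_indefinite_description _ (Hseq n)); auto. }
  set (x := fun n => fst (p n)). set (r := fun n => snd (p n)).
  assert (Hx : forall n, D (x n) /\ A (x n) = b /\ f (W (x n)) = Fin (r n) /\ r n < m + / INR (S n)) by exact Hp.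
  clearbody x r.
  assert (HWb : forall n k, hnorm (hsub (W (x n)) (W (x k))) ^ 2 <= (2 / c0) * (/ INR (S n) + / INR (S k))).
  { intros n k. destruct (Hx n) as [Dn [An [Fn Rn]]]. destruct (Hx k) as [Dk [Ak [Fk Rk]]].
    pose proof (Hmid _ _ _ _ Dn An Fn Dk Ak Fk).
    set (q := hnorm (hsub (W (x n)) (W (x k))) ^ 2) in *.
    apply (Rmult_le_reg_l (c0 / 4)). lra.
    replace (c0 / 4 * (2 / c0 * (/ INR (S n) + / INR (S k)))) with ((/ INR (S n) + / INR (S k)) / 2) by (field; nz).
    lra. }
  assert (HCW := cauchy_crit (fun n k => hnorm (hsub (W (x n)) (W (x k)))) (2 / c0)
                  ltac:(apply Rdiv_lt_0_compat; lra) ltac:(intros; apply hnorm_nonneg) HWb).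
  assert (HCx := cauchy_crit (fun n k => hnorm (hsub (x n) (x k))) (2 / c0 / c1)
                  ltac:(apply Rdiv_lt_0_compat; [apply Rdiv_lt_0_compat|]; lra) ltac:(intros; apply hnorm_nonneg)
                  ltac:(intros n k; destruct (Hx n) as [Dn [An _]]; destruct (Hx k) as [Dk [Ak _]];
                        pose proof (Hco _ _ Dn An Dk Ak); pose proof (HWb n k);
                        apply (Rmult_le_reg_l c1); [lra|];
                        replace (c1 * (2 / c0 / c1 * (/ INR (S n) + / INR (S k)))) with (2 / c0 * (/ INR (S n) + / INR (S k))) by (field; nz);
                        lra)).
  destruct (hcomplete X x HCx) as [xs Hxs].
  destruct (hcomplete Y (fun n => W (x n)) HCW) as [ys Hys].
  change (hconv x xs) in Hxs. change (hconv (fun n => W (x n)) ys) in Hys.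
  destruct (Wclosed x xs ys (fun n => proj1 (Hx n)) Hxs Hys) as [Dxs Wxs].
  assert (Axs : A xs = b).
  { apply hsub_eq0, hnorm_eq0, zero_of_small. apply hnorm_nonneg.
    intros eps He. set (C' := Rabs C + 1).
    assert (HC' : 0 < C') by (unfold C'; pose proof (Rabs_pos C); lra).
    destruct (Hxs (eps / C') ltac:(apply Rdiv_lt_0_compat; lra)) as [N HN].
    specialize (HN N (le_n N)). destruct (Hx N) as [_ [AN _]].
    rewrite <- AN, <- Asub. pose proof (HC (hsub xs (x N))).
    rewrite hnorm_sub_sym in H0.
    pose proof (hnorm_nonneg _ (hsub (x N) xs)).
    pose proof (Rle_abs C).
    assert (C * hnorm (hsub (x N) xs) <= C' * hnorm (hsub (x N) xs)) by (unfold C'; nra).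
    assert (C' * hnorm (hsub (x N) xs) < C' * (eps / C')) by nra.
    replace (C' * (eps / C')) with eps in H4 by (field; nz). lra. }
  assert (Hfv : forall eps, 0 < eps -> ele (f ys) (Fin (m + eps))).
  { intros eps He. destruct (small_inv eps He) as [N HN].
    apply (Hlsc (m + eps) (fun k => W (x (N + k)%nat))).
    - intro k. destruct (Hx (N + k)%nat) as [_ [_ [Fk Rk]]]. rewrite Fk. simpl.
      pose proof (HN (N + k)%nat ltac:(lia)). lra.
    - intros e' He'. destruct (Hys e' He') as [N' HN']. exists N'. intros n Hn. apply HN'. lia. }
  destruct (f ys) as [rs|] eqn:Ers.
  2:{ specialize (Hfv 1 ltac:(lra)). simpl in Hfv. contradiction. }
  assert (Hrs : rs = m).
  { apply Rle_antisym.
    - apply Rnot_lt_le; intro Hlt. specialize (Hfv ((rs - m) / 2) ltac:(lra)). simpl in Hfv. lra.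
    - apply (Hm1 xs); auto. rewrite Wxs; auto. }
  subst rs. rewrite <- Wxs in Ers.
  exists xs. split; [|split].
  - split; [auto|split; [auto|]]. intros z Dz Az. rewrite Ers.
    destruct (f (W z)) as [rz|] eqn:Ez; simpl; auto. apply (Hm1 z); auto.
  - intros z [Dz [Az Hz]]. specialize (Hz xs Dxs Axs). rewrite Ers in Hz.
    destruct (f (W z)) as [rz|] eqn:Ez; simpl in Hz; [|contradiction].
    pose proof (Hm1 z rz Dz Az Ez).
    pose proof (Hmid _ _ _ _ Dz Az Ez Dxs Axs Ers).
    pose proof (Hco _ _ Dz Az Dxs Axs).
    pose proof (hnorm_nonneg _ (hsub (W z) (W xs))).
    pose proof (hnorm_nonneg _ (hsub z xs)).
    set (g := hnorm (hsub (W z) (W xs))) in *. set (h := hnorm (hsub z xs)) in *.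
    assert (g ^ 2 <= 0) by nra. assert (h ^ 2 <= 0) by nra.
    apply hsub_eq0, hnorm_eq0. fold h. apply Rle_antisym; nra.
  - unfold dom. rewrite Ers. discriminate.
Qed.
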